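(* Let $\mathcal{T}\subset\mathbb{R}$ be a compact interval of positive length, let $y_1,\dots,y_n$ and $g$ be continuous real functions on $\mathcal{T}$, and let $\alpha\in[1/(l+1),1)$. Define $k$, $\mathcal{H}_2$ and $M$ as in the context, and assume $M(t)>0$ for all $t\in\mathcal{T}$. Set $$\bar s^c(t):=\frac{M(t)}{\int_{\mathcal{T}}M(u)\,du}.$$ Then $$k^{\bar s^c}=\int_{\mathcal{T}}M(t)\,dt.$$
   Context: $\{1,\dots,n\}$ is partitioned into $\mathcal{I}_1$ with $|\mathcal{I}_1|=m\ge1$ and $\mathcal{I}_2$ with $|\mathcal{I}_2|=l\ge1$. Put $r:=\lceil (l+1)(1-\alpha)\rceil$. Let $k$ be the $r$-th smallest value of the multiset $\{\sup_{t\in\mathcal{T}}|y_h(t)-g(t)|:h\in\mathcal{I}_2\}$. Define $$\mathcal{H}_2:=\{j\in\mathcal{I}_2:\sup_{t\in\mathcal{T}}|y_j(t)-g(t)|\le k\},\qquad M(t):=\max_{j\in\mathcal{H}_2}|y_j(t)-g(t)|.$$ For any bounded function $u:\mathcal{T}\to(0,\infty)$, define the scores $R^u_h:=\sup_{t\in\mathcal{T}}|y_h(t)-g(t)|/u(t)$ for $h\in\mathcal{I}_2$, and let $k^u$ be the $r$-th smallest value of the multiset $\{R^u_h:h\in\mathcal{I}_2\}$. *)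

(* Defs.v *)
From HB Require Import structures.
From mathcomp Require Import all_boot all_order all_algebra.
From mathcomp Require Import all_classical all_reals all_analysis.
Set Implicit Arguments. Unset Strict Implicit. Unset Printing Implicit Defensive.
Import Order.TTheory GRing.Theory Num.Theory numFieldNormedType.Exports.
Local Open Scope classical_set_scope.
Local Open Scope ring_scope.

Section Defs.
Variable R : realType.

Definition supT (a b : R) (f : R -> R) : R := sup [set f t | t in `[a, b]].

(* r-th smallest value (r >= 1) of the multiset s *)
Definition kth_smallest (s : seq R) (r : nat) : R := nth 0 (sort <=%R s) r.-1.

Definition rank_r (l : nat) (alpha : R) : nat := `|Num.ceil ((l.+1)%:R * (1 - alpha))|%N.

Variables (n : nat) (a b : R) (y : 'I_n -> R -> R) (g : R -> R) (I2 : {set 'I_n}) (alpha : R).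

Definition score (h : 'I_n) : R := supT a b (fun t => `|y h t - g t|).

Definition kval : R := kth_smallest [seq score h | h <- enum I2] (rank_r #|I2| alpha).

Definition H2 : {set 'I_n} := [set j in I2 | score j <= kval].

(* M(t) = max_{j in H2} |y_j(t) - g(t)| (values are >= 0 and H2 is nonempty) *)
Definition Mfun (t : R) : R := \big[Order.max/0]_(j in H2) `|y j t - g t|.

Definition score_u (u : R -> R) (h : 'I_n) : R := supT a b (fun t => `|y h t - g t| / u t).

Definition kval_u (u : R -> R) : R :=
  kth_smallest [seq score_u u h | h <- enum I2] (rank_r #|I2| alpha).

End Defs.

(* Main.v *)
Require Import Defs.
From HB Require Import structures.
From mathcomp Require Import all_boot all_order all_algebra.
From mathcomp Require Import all_classical all_reals all_analysis.
From mathcomp Require Import lra.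
Import Order.TTheory GRing.Theory Num.Theory numFieldNormedType.Exports.
Local Open Scope classical_set_scope.
Local Open Scope ring_scope.


Lemma rank_bounds (R : realType) (l : nat) (alpha : R) :
  1 / (l.+1)%:R <= alpha -> alpha < 1 ->
  (0 < rank_r l alpha)%N /\ (rank_r l alpha <= l)%N.
Proof.
move=> ha h1; rewrite /rank_r.
set x := (l.+1)%:R * (1 - alpha).
have l1 : (0 : R) < (l.+1)%:R by rewrite ltr0n.
have xp : 0 < x by rewrite /x mulr_gt0 // subr_gt0.
have xl : x <= l%:R.
  have : 1 <= (l.+1)%:R * alpha.
    by rewrite -ler_pdivrMl // mulr1 -[_^-1]mul1r.
  rewrite /x mulrBr mulr1 -natr1 => H; lra.
have c0 : (0 < Num.ceil x)%R by rewrite ceil_gt0.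
have cl : (Num.ceil x <= l%:Z)%R by rewrite ceil_le_int.
case: (Num.ceil x) c0 cl => [m|m] //= c0 cl.

Qed.

Lemma sub_in_count' (T : eqType) (p q : pred T) (s : seq T) :
  (forall x, x \in s -> p x -> q x) -> (count p s <= count q s)%N.
Proof.
elim: s => //= x s IH H.
apply: leq_add; last by apply: IH => z zs; apply: H; rewrite inE zs orbT.
by case px: (p x) => //; rewrite (H x) // inE eqxx.
Qed.

Lemma sorted_count_nth {R : realType} (t : seq R) i :
  sorted <=%R t -> (i < size t)%N ->
  (count (fun z : R => (z < nth 0 t i)%R) t <= i)%N /\
  (i < count (fun z : R => (z <= nth 0 t i)%R) t)%N.
Proof.
move=> st it.
have hle : forall j, (j < size t)%N -> (j <= i)%N -> nth 0 t j <= nth 0 t i.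
  by move=> j jt ij; apply: (sorted_leq_nth le_trans le_refl).
have hge : forall j, (j < size t)%N -> (i <= j)%N -> nth 0 t i <= nth 0 t j.
  by move=> j jt ij; apply: (sorted_leq_nth le_trans le_refl).
split.
  set P := (fun z : R => (z < nth 0 t i)%R).
  have -> : count P t = count P (take i t ++ drop i t) by rewrite cat_take_drop.
  rewrite count_cat.
  have -> : count P (drop i t) = 0%N.
    apply/eqP; rewrite -leqn0 -(count_pred0 (drop i t)).
    apply: sub_in_count' => z /(nthP 0) [j jd <-].
    rewrite nth_drop; rewrite size_drop in jd.
    rewrite /P ltNge (hge (i + j)%N) ?leq_addr //; by rewrite -ltn_subRL.
  rewrite addn0; apply: leq_trans (count_size _ _) _.
  by rewrite size_take it.
set Q := (fun z : R => (z <= nth 0 t i)%R).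
have -> : count Q t = count Q (take i.+1 t ++ drop i.+1 t) by rewrite cat_take_drop.
rewrite count_cat.
apply: leq_trans (leq_addr _ _).
have -> : count Q (take i.+1 t) = size (take i.+1 t).
  apply/eqP; rewrite -all_count; apply/allP => z /(nthP 0) [j].
  rewrite size_takel // => ji <-.
  by rewrite nth_take //; apply: hle => //; apply: leq_trans ji it.
by rewrite size_takel //.
Qed.

Lemma kth_spec (R : realType) (s : seq R) r :
  (0 < r)%N -> (r <= size s)%N ->
  (count (fun z : R => (z < kth_smallest s r)%R) s < r)%N /\
  (r <= count (fun z : R => (z <= kth_smallest s r)%R) s)%N.
Proof.
move=> r0 rs; rewrite /kth_smallest.
have st := sort_sorted (@le_total _ R) s.
have ir : (r.-1 < size (sort <=%R s))%N by rewrite size_sort prednK.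
have [h1 h2] := sorted_count_nth _ _ st ir.
rewrite !count_sort in h1 h2.
split; rewrite -(prednK r0) ?ltnS //.
Qed.

Lemma kth_char (R : realType) (s : seq R) r v :
  (0 < r)%N -> (count (fun z : R => (z < v)%R) s < r)%N ->
  (r <= count (fun z : R => (z <= v)%R) s)%N -> kth_smallest s r = v.
Proof.
move=> r0 c1 c2.
have rs : (r <= size s)%N := leq_trans c2 (count_size _ _).
have [h1 h2] := kth_spec _ _ _ r0 rs.
set x := kth_smallest s r in h1 h2 *.
case: (ltgtP x v) => // [xv|vx].
- have : (r <= count (fun z : R => (z < v)%R) s)%N.
    apply: leq_trans h2 _; apply: sub_count => z /= zx; exact: le_lt_trans zx xv.
  by rewrite leqNgt c1.
- have : (r <= count (fun z : R => (z < x)%R) s)%N.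
    apply: leq_trans c2 _; apply: sub_count => z /= zx; exact: le_lt_trans zx vx.
  by rewrite leqNgt h1.
Qed.

Section An.
Variable R : realType.

Lemma supT_max (a b : R) f : a <= b -> {within `[a, b], continuous f} ->
  exists2 c, a <= c <= b &
    (supT a b f = f c /\ forall t, a <= t <= b -> f t <= f c).
Proof.
move=> ab cf; have [c cin cmax] := EVT_max ab cf.
have cab : a <= c <= b by move: cin; rewrite in_itv.
exists c => //; split; last by move=> t tab; apply: cmax; rewrite in_itv.
rewrite /supT; apply/eqP; rewrite eq_le; apply/andP; split.
  apply: ge_sup; first by exists (f c); exists c => //; rewrite /= in_itv.
  by move=> z [t tin <-]; apply: cmax.
apply: ub_le_sup; last by exists c => //; rewrite /= in_itv.
by exists (f c) => z [t tin <-]; apply: cmax.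
Qed.

Lemma wc_abs_sub (A : set R) (f g : R -> R) :
  {within A, continuous f} -> {within A, continuous g} ->
  {within A, continuous (fun t => `|f t - g t|)}.
Proof.
move=> cf cg x; apply: cvg_norm; apply: cvgB; [exact: cf | exact: cg].
Qed.

Lemma wc_max (A : set R) (f g : R -> R) :
  {within A, continuous f} -> {within A, continuous g} ->
  {within A, continuous (fun t => Order.max (f t) (g t))}.
Proof.
move=> cf cg x; exact: (continuous_max (cf x) (cg x)).
Qed.

Lemma wc_bigmax (A : set R) (I : Type) (s : seq I) (P : pred I) (F : I -> R -> R) :
  (forall i, {within A, continuous (F i)}) ->
  {within A, continuous (fun t => \big[Order.max/0]_(j <- s | P j) F j t)}.
Proof.
move=> cF; elim: s => [|i s IH].
  have -> : (fun t => \big[Order.max/0]_(j <- [::] | P j) F j t) = (fun=> 0).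
    by apply: funext => t; rewrite big_nil.
  exact: cst_continuous.
have -> : (fun t => \big[Order.max/0]_(j <- i :: s | P j) F j t) =
   (fun t => if P i then Order.max (F i t) (\big[Order.max/0]_(j <- s | P j) F j t)
             else \big[Order.max/0]_(j <- s | P j) F j t).
  by apply: funext => t; rewrite big_cons.
by case: (P i) => //; apply: wc_max.
Qed.

Lemma wc_ratio (A : set R) (f m : R -> R) (c : R) :
  {within A, continuous f} -> {within A, continuous m} ->
  (forall t, A t -> m t != 0) -> c != 0 ->
  {within A, continuous (fun t => f t / (m t / c))}.
Proof.
move=> cf cm m0 c0; rewrite continuous_subspace_in => x /set_mem Ax.
apply: cvgM; first exact: cf.
apply: cvgV; first by rewrite mulf_neq0 ?invr_eq0 //; apply: m0.
by apply: cvgMr_tmp; exact: cm.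
Qed.

End An.

Lemma ratio_le (R : realType) (x m c : R) : 0 < m -> 0 < c -> x <= m -> x / (m / c) <= c.
Proof.
move=> m0 c0 xm; rewrite invf_div mulrA ler_pdivrMr //; nra.
Qed.

Lemma ratio_ge (R : realType) (x m c : R) : 0 < m -> 0 < c -> m <= x -> c <= x / (m / c).
Proof.
move=> m0 c0 xm; rewrite invf_div mulrA ler_pdivlMr //; nra.
Qed.

Lemma kth_all0 (R : realType) (s : seq R) r : (forall z, z \in s -> z = 0) ->
  kth_smallest s r = 0.
Proof.
move=> H; rewrite /kth_smallest.
case: (ltnP r.-1 (size (sort <=%R s))) => hr; last by rewrite nth_default.
by apply: H; rewrite -(mem_sort <=%R); apply: mem_nth.
Qed.

Theorem mainTheorem5 (R : realType) (n : nat) (a b : R) (y : 'I_n -> R -> R) (g : R -> R)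
    (I2 : {set 'I_n}) (alpha : R) :
  a < b ->
  (forall i : 'I_n, {within `[a, b]%classic, continuous (y i : R -> R)}) ->
  {within `[a, b]%classic, continuous (g : R -> R)} ->
  (0 < #|~: I2|)%N ->
  (0 < #|I2|)%N ->
  1 / (#|I2|.+1)%:R <= alpha -> alpha < 1 ->
  (forall t, a <= t <= b -> 0 < Mfun a b y g I2 alpha t) ->
  kval_u a b y g I2 alpha
    (fun t => Mfun a b y g I2 alpha t /
              Rintegral lebesgue_measure `[a, b] (Mfun a b y g I2 alpha))
  = Rintegral lebesgue_measure `[a, b] (Mfun a b y g I2 alpha).
Proof.
move=> ab cy cg _ pI2 ha h1 Mpos.
have ab' : a <= b by apply: ltW.
set M := Mfun a b y g I2 alpha.
set I := Rintegral lebesgue_measure `[a, b] M.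
have I0 : 0 <= I.
  apply: Rintegral_ge0 => t; rewrite /= in_itv => /Mpos; exact: ltW.
have [r0 rl] := rank_bounds _ _ _ ha h1.
have cD : forall h, {within `[a, b], continuous (fun t => `|y h t - g t|)}.
  by move=> h; apply: wc_abs_sub.
have cM : {within `[a, b], continuous M}.
  by rewrite /M /Mfun; apply: wc_bigmax.
case: (eqVneq I 0) => [IE|Inz].
  rewrite /kval_u {2}IE; apply: kth_all0 => z /mapP [h _ ->].
  rewrite /score_u IE.
  have -> : (fun t => `|y h t - g t| / (M t / 0)) = (fun=> 0).
    by apply: funext => t; rewrite invr0 mulr0 invr0 mulr0.
  have [c _ [-> _]] := supT_max _ _ _ _ ab' (@cst_continuous _ _ (0 : R)).
  by [].
have Ipos : 0 < I by rewrite lt_def Inz I0.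
have Mnz : forall t, `[a, b]%classic t -> M t != 0.
  by move=> t; rewrite /= in_itv => /Mpos /lt0r_neq0.
have rc : forall h, {within `[a, b], continuous
    (fun t => `|y h t - g t| / (M t / I))}.
  by move=> h; apply: wc_ratio.
set k := kval a b y g I2 alpha.
set S := [seq score a b y g h | h <- enum I2].
have sizeS : size S = #|I2| by rewrite size_map -cardE.
have scge : forall h t, a <= t <= b -> `|y h t - g t| <= score a b y g h.
  move=> h t tab; rewrite /score; have [c _ [-> H]] := supT_max _ _ _ _ ab' (cD h).
  exact: H.
have kS : k \in S.
  rewrite /k /kval /kth_smallest -(mem_sort <=%R); apply: mem_nth.
  by rewrite size_sort sizeS prednK.
have k0 : 0 <= k.
  move/mapP: kS => [j _ ->].
  apply: le_trans (scge j a _); first exact: normr_ge0.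
  by rewrite lexx ab'.
have Mk : forall t, a <= t <= b -> M t <= k.
  move=> t tab; rewrite /M /Mfun; apply: bigmax_le => // j.
  rewrite /H2 inE => /andP [_ jk]; apply: le_trans jk; exact: scge.
have Mge : forall t, a <= t <= b -> forall j, j \in H2 a b y g I2 alpha ->
    `|y j t - g t| <= M t.
  move=> t _ j jH; rewrite /M /Mfun.
  exact: (le_bigmax_seq 0 j (fun j0 => j0 \in H2 a b y g I2 alpha) (fun j => `|y j t - g t|) (mem_index_enum j) jH).
have [k1 k2] : _ := kth_spec _ S _ r0 (ltac:(by rewrite sizeS)).
have F1 : forall h, h \in I2 -> score a b y g h <= k ->
    score_u a b y g (fun t => M t / I) h <= I.
  move=> h hI hk.
  rewrite /score_u; have [c cab [-> _]] := supT_max _ _ _ _ ab' (rc h).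
  apply: ratio_le => //; first exact: Mpos.
  by apply: Mge => //; rewrite /H2 inE hI hk.
have F2 : forall h, k <= score a b y g h ->
    I <= score_u a b y g (fun t => M t / I) h.
  move=> h hk.
  have [c cab [E _]] := supT_max _ _ _ _ ab' (cD h).
  rewrite /score_u; have [d dab [-> H]] := supT_max _ _ _ _ ab' (rc h).
  apply: le_trans (H c cab).
  apply: ratio_ge => //; first exact: Mpos.
  by apply: le_trans (Mk c cab) _; rewrite -E.
rewrite /kval_u; apply: kth_char => //.
  rewrite count_map; apply: leq_ltn_trans k1.
  rewrite /S count_map; apply: sub_in_count' => h hI /= hu.
  rewrite ltNge; apply/negP => kh.
  by move: (F2 h kh); rewrite leNgt hu.
apply: leq_trans k2 _.
rewrite /S !count_map; apply: sub_in_count' => h hI /= hk.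
by apply: F1 => //; rewrite mem_enum in hI.
Qed.
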